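(* In $\mathbb{Z}[q,q^{-1}][[x,y]]$, \[ A(q,x,y)=\sum_{i=1}^{\infty}q^i[i]!\,x^iy^i\prod_{j=0}^{i}\frac{1}{q^j-q^j[j+1]x+[j]xy}. \]
   Context: $[m]=1+q+\dots+q^{m-1}$ ($[0]=0$), $[i]!=\prod_{m=1}^i[m]$. For $0\le k\le n$, a $\hbox{Le}$-diagram in a $k\times(n-k)$ rectangle is a pair $(\lambda,D)$ with $\lambda=(\lambda_1\ge\dots\ge\lambda_k\ge0)$, $\lambda_1\le n-k$, and $D$ a filling of the Young diagram of $\lambda$ (row $i$ has $\lambda_i$ left-justified boxes, row 1 on top) by $0$'s and $1$'s such that no $0$ has a $1$ above it in its column and a $1$ to its left in its row; its rank is its number of $1$'s. $A_{k,n}(q)=\sum q^{\mathrm{rank}}$ over such diagrams (the generating function of cells of the totally nonnegative Grassmannian $Gr^+_{k,n}$ by dimension), $A_{k,n}(q)=0$ for $n<k$, and $A(q,x,y)=\sum_{k\ge1}\sum_{n\ge0}A_{k,n}(q)x^ny^k$. Each factor $1/(q^j-q^j[j+1]x+[j]xy)$ is its inverse in $\mathbb{Z}[q,q^{-1}][[x,y]]$ (equivalently the expansion of $\frac{1}{q^j(1-[j+1]x)\left(1-\frac{q^{-j}[j]y}{1-[j+1]x}\right)}$). *)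

(* Defs.v *)
From mathcomp Require Import all_boot all_order all_algebra.
Set Implicit Arguments. Unset Strict Implicit. Unset Printing Implicit Defensive.
Import GRing.Theory.
Local Open Scope ring_scope.

Section Defs.
Variable R : comUnitRingType.

Definition qint (q : R) (m : nat) : R := \sum_(i < m) q ^+ i.
Definition qfact (q : R) (i : nat) : R := \prod_(1 <= m < i.+1) qint q m.

(* A Le-diagram in a k x m rectangle (m = n - k): a shape lambda given by the
   row lengths lam i (row 0 = top row), and a 0/1 filling D of the boxes
   (D (i,j) = true means the box (i,j) contains a 1). Boxes outside lambda
   carry no entry; we force D to be false there. *)
Definition LeType (k m : nat) :=
  ({ffun 'I_k -> 'I_m.+1} * {ffun 'I_k * 'I_m -> bool})%type.

Definition isLe (k m : nat) (p : LeType k m) : bool :=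
  let lam := p.1 in let D := p.2 in
  [&& [forall i : 'I_k, forall i' : 'I_k, (i <= i')%N ==> (lam i' <= lam i)%N],
      [forall c : 'I_k * 'I_m, D c ==> (c.2 < lam c.1)%N] &
      [forall c : 'I_k * 'I_m,
         ((c.2 < lam c.1)%N && ~~ D c) ==>
         ~~ ([exists i' : 'I_k, (i' < c.1)%N && D (i', c.2)] &&
             [exists j' : 'I_m, (j' < c.2)%N && D (c.1, j')])]].

Definition LeRank (k m : nat) (p : LeType k m) : nat :=
  #|[pred c : 'I_k * 'I_m | p.2 c]|.

Definition Akn (q : R) (k n : nat) : R :=
  if (k <= n)%N then \sum_(p : LeType k (n - k) | isLe p) q ^+ LeRank p
  else 0.

(* Formal power series in x, y over R: s n k = coefficient of x^n y^k. *)
Definition ser := nat -> nat -> R.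

Definition serone : ser := fun n k => if (n == 0)%N && (k == 0)%N then 1 else 0.

Definition sermul (s t : ser) : ser := fun n k =>
  \sum_(a < n.+1) \sum_(b < k.+1) s a b * t (n - a)%N (k - b)%N.

Definition serscale (c : R) (s : ser) : ser := fun n k => c * s n k.

Definition serxy (i : nat) (s : ser) : ser := fun n k =>
  if (i <= n)%N && (i <= k)%N then s (n - i)%N (k - i)%N else 0.

Fixpoint serprod (g : nat -> ser) (i : nat) : ser :=
  match i with
  | 0 => g 0%N
  | i'.+1 => sermul (serprod g i') (g i)
  end.

Definition factor (q : R) (j : nat) : ser := fun n k =>
  if (n == 0)%N && (k == 0)%N then q ^+ j
  else if (n == 1)%N && (k == 0)%N then - (q ^+ j * qint q j.+1)
  else if (n == 1)%N && (k == 1)%N then qint q j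
  else 0.

Definition Aser (q : R) : ser := fun n k => if (1 <= k)%N then Akn q k n else 0.

Definition rhsterm (q : R) (g : nat -> ser) (i : nat) : ser :=
  serxy i (serscale (q ^+ i * qfact q i) (serprod g i)).

(* the infinite sum over i >= 1: the coefficient of x^n y^k only receives
   contributions from i <= n (summands with i > n vanish there identically) *)
Definition rhs (q : R) (g : nat -> ser) : ser := fun n k =>
  \sum_(1 <= i < n.+1) rhsterm q g i n k.

End Defs.

(* Main.v *)
Require Import Defs.
From mathcomp Require Import all_boot all_order all_algebra.
From mathcomp Require Import ring.
From Stdlib Require Import FunctionalExtensionality.
Set Implicit Arguments. Unset Strict Implicit. Unset Printing Implicit Defensive.
Import GRing.Theory.
Local Open Scope ring_scope.

Section Alg.
Variable R : comUnitRingType.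
Variable q : R.

Definition Lf (j : nat) (h : ser R) : ser R := fun n k =>
  q ^+ j * h n k + (if n is n'.+1 then - (q ^+ j * qint q j.+1) * h n' k
     + (if k is k'.+1 then qint q j * h n' k' else 0) else 0).

Lemma sermulE (s t : ser R) n k : sermul s t n k =
  \sum_(0 <= a < n.+1) \sum_(0 <= b < k.+1) s a b * t (n - a)%N (k - b)%N.
Proof. by rewrite /sermul big_mkord; apply: eq_bigr => a _; rewrite big_mkord. Qed.

Lemma sermul_factor j h n k : sermul (factor q j) h n k = Lf j h n k.
Proof.
rewrite sermulE big_nat_recl // big_nat_recl // !subn0 /factor /=.
rewrite [X in _ + X + _]big1 ?addr0; last by move=> *; rewrite mul0r.
rewrite /Lf; congr (_ + _).
case: n => [|n]; first by rewrite big_nil.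
rewrite big_nat_recl // [X in _ + X]big1 ?addr0; last first.
  by move=> a _; rewrite big1 // => b _; rewrite mul0r.
rewrite subSS subn0.
case: k => [|k]; first by rewrite big_nat1 /= addr0.
rewrite big_nat_recl // big_nat_recl // [X in _ + (_ + X)]big1 ?addr0; last first.
  by move=> b _; rewrite mul0r.
by rewrite /= !subn0 subSS subn0.
Qed.

Lemma sermul_ext (s s' t : ser R) n k : (forall a b, s a b = s' a b) ->
  sermul s t n k = sermul s' t n k.
Proof. by move=> e; apply: eq_bigr => a _; apply: eq_bigr => b _; rewrite e. Qed.

Lemma sermulZl c (s t : ser R) n k :
  sermul (fun a b => c * s a b) t n k = c * sermul s t n k.
Proof.
rewrite /sermul mulr_sumr; apply: eq_bigr => a _; rewrite mulr_sumr.
by apply: eq_bigr => b _; rewrite mulrA.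
Qed.

Lemma sermulDl (s1 s2 t : ser R) n k :
  sermul (fun a b => s1 a b + s2 a b) t n k = sermul s1 t n k + sermul s2 t n k.
Proof.
rewrite /sermul -big_split; apply: eq_bigr => a _; rewrite -big_split.
by apply: eq_bigr => b _; rewrite mulrDl.
Qed.

Definition shx (s : ser R) : ser R := fun a b => if a is a'.+1 then s a' b else 0.
Definition shxy (s : ser R) : ser R := fun a b =>
  if a is a'.+1 then (if b is b'.+1 then s a' b' else 0) else 0.

Lemma sermul_shx s t n k :
  sermul (shx s) t n k = if n is n'.+1 then sermul s t n' k else 0.
Proof.
rewrite !sermulE big_nat_recl // [X in X + _]big1 ?add0r; last by move=> *; rewrite mul0r.
case: n => [|n]; first by rewrite big_nil.
by rewrite sermulE; apply: eq_bigr => a _; apply: eq_bigr => b _; rewrite subSS.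
Qed.

Lemma sermul_shxy s t n k :
  sermul (shxy s) t n k = if n is n'.+1 then (if k is k'.+1 then sermul s t n' k' else 0) else 0.
Proof.
rewrite !sermulE big_nat_recl // [X in X + _]big1 ?add0r; last by move=> *; rewrite mul0r.
case: n => [|n]; first by rewrite big_nil.
case: k => [|k].
  by rewrite big1 // => a _; rewrite big_nat1 mul0r.
rewrite sermulE; apply: eq_bigr => a _; rewrite big_nat_recl // mul0r add0r.
by apply: eq_bigr => b _; rewrite !subSS.
Qed.

Lemma Lf_decomp j s a b : Lf j s a b =
  q ^+ j * s a b + (- (q ^+ j * qint q j.+1) * shx s a b + qint q j * shxy s a b).
Proof.
rewrite /Lf /shx /shxy; case: a => [|a]; first by rewrite !mulr0 !addr0.
by case: b => [|b]; rewrite ?mulr0 ?addr0.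
Qed.

Lemma sermul_Lf j s t n k : sermul (Lf j s) t n k = Lf j (sermul s t) n k.
Proof.
rewrite (sermul_ext _ _ _ (Lf_decomp j s)) sermulDl sermulZl sermulDl !sermulZl.
rewrite sermul_shx sermul_shxy /Lf.
by case: n => [|n]; [rewrite !mulr0 !addr0 | case: k => [|k]; rewrite ?mulr0 ?addr0].
Qed.

Lemma sermul1 (t : ser R) n k : sermul (serone R) t n k = t n k.
Proof.
rewrite sermulE big_nat_recl // big_nat_recl // /serone /= mul1r !subn0.
rewrite [X in _ + X + _]big1 ?addr0; last by move=> *; rewrite mul0r.
by rewrite big1 ?addr0 // => a _; rewrite big1 // => b _; rewrite mul0r.
Qed.

Lemma qintS m : qint q m.+1 = qint q m + q ^+ m.
Proof. by rewrite /qint big_ord_recr. Qed.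

Lemma qintSl m : qint q m.+1 = 1 + q * qint q m.
Proof.
rewrite /qint big_ord_recl expr0 mulr_sumr; congr (_ + _).
by apply: eq_bigr => i _; rewrite lift0 exprS.
Qed.

Lemma qint0 : qint q 0 = 0.
Proof. by rewrite /qint big_ord0. Qed.

Lemma qint1 : qint q 1 = 1.
Proof. by rewrite qintS qint0 add0r expr0. Qed.

End Alg.

Section B.
Variable R : comUnitRingType.
Variable q : R.
Local Notation Lf := (Lf q).
Local Notation qint := (qint q).
Lemma Lf_ext j (h h' : ser R) n k : (forall a b, (a <= n)%N -> h a b = h' a b) ->
  Lf j h n k = Lf j h' n k.
Proof.
move=> e; rewrite /Lf e //; case: n e => [|n] e //.
by rewrite !e // ?leqnSn //; case: k => // k; rewrite e ?leqnSn.
Qed.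

Lemma Lf_sum j N (F : nat -> ser R) n k :
  Lf j (fun a b => \sum_(i < N) F i a b) n k = \sum_(i < N) Lf j (F i) n k.
Proof.
rewrite /Lf big_split /= -mulr_sumr; congr (_ + _).
case: n => [|n]; first by rewrite big1.
rewrite big_split /= -mulr_sumr; congr (_ + _).
by case: k => [|k]; [rewrite big1 | rewrite -mulr_sumr].
Qed.

Lemma Lf_scale j c (h : ser R) n k :
  Lf j (fun a b => c * h a b) n k = c * Lf j h n k.
Proof.
rewrite /Lf; case: n => [|n]; first by ring.
by case: k => [|k]; ring.
Qed.

Lemma Lf_serxy j i h n k : Lf j (serxy i h) n k = serxy i (Lf j h) n k.
Proof.
rewrite /Lf /serxy.
case: (boolP ((i <= n)%N && (i <= k)%N)) => [/andP[hin hik]|hb]; last first.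
  rewrite mulr0 add0r; case: n hb => [|n] hb //.
  have -> : ((i <= n)%N && (i <= k)%N) = false.
    by apply/negbTE; apply: contra hb => /andP[a b]; rewrite (leq_trans a) ?leqnSn.
  rewrite mulr0 add0r; case: k hb => [|k] hb //.
  have -> : ((i <= n)%N && (i <= k)%N) = false.
    by apply/negbTE; apply: contra hb => /andP[a b]; rewrite !(leq_trans _ (leqnSn _)).
  by rewrite mulr0.
rewrite -(subnKC hin) -(subnKC hik) !addKn.
move: (n - i)%N (k - i)%N => n0 k0.
rewrite !leq_addr /=; congr (_ + _).
case: n0 => [|n0].
  rewrite addn0; case: i {hin hik} => [|i] //=.
  by rewrite ltnn /= mulr0 add0r; case: (i.+1 + k0)%N => [|k'] //; rewrite mulr0.
rewrite addnS leq_addr addKn /=; congr (_ + _).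
case: k0 => [|k0].
  rewrite addn0; case: i {hin hik} => [|i] //=.
  by rewrite ltnn mulr0.
by rewrite addnS !leq_addr !addKn.
Qed.

Variable g : nat -> ser R.
Hypothesis hg : forall j : nat, sermul (factor q j) (g j) = serone R.

Fixpoint Qp (m i : nat) : ser R :=
  if i is i'.+1 then sermul (Qp m i') (g (m + i)) else g m.

Lemma Lf_g j n k : Lf j (g j) n k = serone R n k.
Proof. by rewrite -sermul_factor hg. Qed.

Lemma Lf_Qp m i n k :
  Lf m (Qp m i) n k = if i is i'.+1 then Qp m.+1 i' n k else serone R n k.
Proof.
elim: i n k => [|i IH] n k; first exact: Lf_g.
rewrite /= -sermul_Lf (sermul_ext _ _ _ IH).
case: i IH => [|i] IH; first by rewrite sermul1 addn1.
by rewrite /= addSn addnS.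
Qed.

Definition cm (m i : nat) : R := q ^+ (m + i) * \prod_(j < i) qint (m + j.+1).

Lemma cm0 m : cm m 0 = q ^+ m.
Proof. by rewrite /cm big_ord0 addn0 mulr1. Qed.

Lemma cmS m i : cm m i.+1 = qint m.+1 * cm m.+1 i.
Proof.
rewrite /cm big_ord_recl addn1 addSnnS mulrCA; congr (_ * (_ * _)).
by apply: eq_bigr => j _; rewrite lift0 addSnnS.
Qed.

Definition PsiN N m : ser R := fun n k => \sum_(i < N) cm m i * serxy i (Qp m i) n k.
Definition Psi m : ser R := fun n k => PsiN n.+1 m n k.

Lemma PsiN_ext N m n k : (n < N)%N -> PsiN N m n k = Psi m n k.
Proof.
move=> hN; rewrite /Psi /PsiN.
rewrite (big_ord_widen N (fun i => cm m i * serxy i (Qp m i) n k) hN).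
rewrite [RHS]big_mkcond; apply: eq_bigr => i _; case: ifP => // hi.
by rewrite ltnS in hi; rewrite /serxy hi /= mulr0.
Qed.

Lemma serxy_ext i (h h' : ser R) n k : (forall a b, h a b = h' a b) ->
  serxy i h n k = serxy i h' n k.
Proof. by move=> e; rewrite /serxy e. Qed.

Lemma serxy0 (h : ser R) n k : serxy 0 h n k = h n k.
Proof. by rewrite /serxy !subn0. Qed.

Lemma serxyS i (h : ser R) n k : serxy i.+1 h n k =
  if n is n'.+1 then (if k is k'.+1 then serxy i h n' k' else 0) else 0.
Proof. by rewrite /serxy; case: n => [|n] //; case: k => [|k]; rewrite ?andbF // !ltnS !subSS. Qed.

Lemma Lf_Psi m n k : Lf m (Psi m) n k =
  q ^+ m * serone R n k + (if n is n'.+1 then (if k is k'.+1 then qint m.+1 * Psi m.+1 n' k' else 0) else 0).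
Proof.
rewrite (@Lf_ext _ _ (PsiN n.+1 m)); last first.
  by move=> a b hab; rewrite PsiN_ext // ltnS.
rewrite /PsiN (Lf_sum _ _ (fun i a b => cm m i * serxy i (Qp m i) a b)).
under eq_bigr => i _ do rewrite Lf_scale Lf_serxy (serxy_ext _ _ _ (Lf_Qp m i)).
rewrite big_ord_recl cm0 serxy0; congr (_ + _).
under eq_bigr => i _ do rewrite lift0 cmS serxyS.
case: n => [|n]; first by rewrite big_ord0.
case: k => [|k]; first by rewrite big1 // => i _; rewrite mulr0.
rewrite /Psi /PsiN mulr_sumr; apply: eq_bigr => i _.
by rewrite mulrA.
Qed.

Definition Rel (X : nat -> nat -> nat -> R) m n k : Prop :=
  q ^+ m * X m n k = (if (n == 0)%N && (k == 0)%N then q ^+ m else 0) +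
   (if n is n'.+1 then q ^+ m * qint m.+1 * X m n' k +
      (if k is k'.+1 then qint m.+1 * X m.+1 n' k' - qint m * X m n' k' else 0) else 0).

Lemma Psi_Rel m n k : Rel (fun m n k => Psi m n k) m n k.
Proof.
have := Lf_Psi m n k; rewrite /Lf /Rel /serone.
by case: n => [|n]; case: k => [|k] /=; move: (q ^+ m) => Q /(canRL (addrK _)) ->; ring.
Qed.

Lemma Rel_uniq (hq : q \is a GRing.unit) W X Y :
  (forall m n k, (n - k <= W)%N -> Rel X m n k) ->
  (forall m n k, (n - k <= W)%N -> Rel Y m n k) ->
  forall n m k, (n - k <= W)%N -> X m n k = Y m n k.
Proof.
move=> RX RY; elim=> [|n IH] m k hW; apply: (mulrI (unitrX m hq)).
  by rewrite RX // RY.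
rewrite RX // RY // IH //; last by rewrite (leq_trans _ hW) // leq_sub2r.
case: k hW => [|k] hW //.
by rewrite !IH.
Qed.

Lemma Qp0 i n k : Qp 0 i n k = serprod g i n k.
Proof.
elim: i n k => [|i IH] n k //=.
by rewrite (sermul_ext _ _ _ IH).
Qed.

Lemma cm0i i : cm 0 i = q ^+ i * qfact q i.
Proof.
rewrite /cm /qfact add0n; congr (_ * _).
by rewrite big_add1 /= big_mkord.
Qed.

Lemma g0E n k : g 0 n k = (if (k == 0)%N then 1 else 0).
Proof.
elim: n k => [|n IH] k.
  have := Lf_g 0 0 k; rewrite /Lf /serone /= expr0 !mul1r addr0 => ->.
  by case: k.
have := Lf_g 0 n.+1 k; rewrite /Lf /serone /= expr0 !mul1r qint1 qint0 mulN1r.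
case: k => [|k] /=; [rewrite addr0|rewrite mul0r !addr0] => /(canRL (addrK _)).
  by rewrite IH /= add0r opprK.
by rewrite IH /= oppr0 subr0.
Qed.

Lemma rhs_Psi n k : rhs q g n k = Psi 0 n k - g 0 n k.
Proof.
rewrite /Psi /PsiN -(big_mkord xpredT (fun i => cm 0 i * serxy i (Qp 0 i) n k)).
rewrite big_ltn // cm0 expr0 mul1r serxy0 addrC addKr /rhs.
apply: eq_big_nat => i _.
rewrite /rhsterm /serxy /serscale cm0i; case: ifP => _; last by rewrite mulr0.
by rewrite Qp0.
Qed.
End B.

Section C.
Variable R : comUnitRingType.
Variable q : R.
Local Notation qint := (qint q).

Lemma split_subsets W (U : {set 'I_W}) u0 (F : {set 'I_W} -> R) : u0 \in U ->
  \sum_(r : {set 'I_W}) (if r \subset U then F r else 0) =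
  \sum_(r : {set 'I_W}) (if r \subset U :\ u0 then F r + F (u0 |: r) else 0).
Proof.
move=> hu0.
rewrite [LHS](bigID (fun r : {set 'I_W} => u0 \in r)) /=.
pose h (r : {set 'I_W}) := if u0 \in r then r :\ u0 else u0 |: r.
have hinv : involutive h.
  move=> r; rewrite /h; case: (boolP (u0 \in r)) => hr.
    by rewrite setD11 setD1K.
  by rewrite setU11 setU1K.
rewrite (reindex_inj (inv_inj hinv)) /=.
rewrite [X in X + _]big_mkcond [X in _ + X]big_mkcond -big_split /=.
apply: eq_bigr => r _.
rewrite /h subsetD1; case: (boolP (u0 \in r)) => hr /=.
  by rewrite setD11 andbF addr0.
rewrite andbT in_setU1 eqxx /= subUset sub1set hu0 /=.
by case: ifP => _; rewrite ?addr0 // addrC.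
Qed.

Lemma sum_subsets_pow W (U : {set 'I_W}) (x : R) :
  \sum_(r : {set 'I_W}) (if r \subset U then x ^+ #|r| else 0) = (1 + x) ^+ #|U|.
Proof.
move Hn : #|U| => n; elim: n U Hn => [|n IH] U Hn.
  rewrite (cards0_eq Hn) (bigD1 set0) ?sub0set //= cards0 expr0 big1 ?addr0 //.
  by move=> r /negbTE hr; rewrite subset0 hr.
have /set0Pn [u0 hu0] : U != set0 by rewrite -cards_eq0 Hn.
rewrite (split_subsets _ hu0).
have HU : #|U :\ u0| = n by move: Hn; rewrite (cardsD1 u0) hu0 add1n => [[]].
rewrite exprS -(IH (U :\ u0)) // mulr_sumr; apply: eq_bigr => r _.
case: ifP => hr; last by rewrite mulr0.
have hu0r : u0 \notin r by move: hr; rewrite subsetD1 => /andP[].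
by rewrite cardsU1 hu0r exprS; ring.
Qed.

Definition newres W (r : {set 'I_W}) (j : 'I_W) :=
  (j \notin r) && [exists j' : 'I_W, (j' < j)%N && (j' \in r)].

Fixpoint cfun (z : R) (v : nat) : R :=
  if v is v'.+1 then z * cfun z v' + q * z * (1 + q * z) ^+ v' else 1.

Lemma sum_subsets_c W (U : {set 'I_W}) z :
  \sum_(r : {set 'I_W}) (if r \subset U then
       q ^+ #|r| * z ^+ #|[set j in U | ~~ newres r j]| else 0) = cfun z #|U|.
Proof.
move Hn : #|U| => n; elim: n U Hn => [|n IH] U Hn.
  rewrite (cards0_eq Hn) (bigD1 set0) ?sub0set //= cards0 expr0 big1 ?addr0.
    have -> : [set j in set0 | ~~ newres set0 j] = set0 :> {set 'I_W}.
      by apply/setP => j; rewrite !inE.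
    by rewrite cards0 expr0 mulr1.
  by move=> r /negbTE hr; rewrite subset0 hr.
have /set0Pn [i0 hi0] : U != set0 by rewrite -cards_eq0 Hn.
case: (arg_minnP (fun j : 'I_W => val j) hi0) => u0 hu0 hmin.
have {}hu0 : u0 \in U by exact: hu0.
have {}hmin : forall j, j \in U -> (u0 <= j)%N by move=> j hj; exact: hmin.
rewrite (split_subsets _ hu0).
have HU : #|U :\ u0| = n by move: Hn; rewrite (cardsD1 u0) hu0 add1n => [[]].
rewrite /= -(IH (U :\ u0)) // -HU -sum_subsets_pow !mulr_sumr -big_split.
apply: eq_bigr => r _ /=.
case: ifP => hr; last by rewrite !mulr0 addr0.
have hu0r : u0 \notin r by move: hr; rewrite subsetD1 => /andP[].
have hrU : r \subset U by move: hr; rewrite subsetD1 => /andP[].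
have E1 : [set j in U | ~~ newres r j] = u0 |: [set j in U :\ u0 | ~~ newres r j].
  apply/setP => j; rewrite !inE; case: (eqVneq j u0) => [->|hj] //=.
  rewrite hu0 /newres /=; apply/negP => /andP[_ /existsP[j' /andP[lt jr]]].
  have := hmin j' (subsetP hrU j' jr); by rewrite leqNgt lt.
have E2 : [set j in U | ~~ newres (u0 |: r) j] = u0 |: r.
  apply/setP => j; rewrite !inE; case: (eqVneq j u0) => [->|hj] /=.
    by rewrite hu0 /newres !inE eqxx.
  case: (boolP (j \in r)) => hjr.
    by rewrite (subsetP hrU j hjr) /newres !inE hjr orbT.
  case: (boolP (j \in U)) => hjU //=.
  rewrite /newres !inE (negbTE hj) (negbTE hjr) /=; apply/negP; apply/negP.
  apply/existsP; exists u0; rewrite !inE eqxx andbT ltn_neqAle hmin // andbT.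
  by rewrite eq_sym.
rewrite E1 E2 !cardsU1 hu0r !inE eqxx /= !add1n !exprS exprMn.
move: (q ^+ #|r|) (z ^+ #|r|) (z ^+ #|[set j in U :\ u0 | ~~ newres r j]|) => a b c.
ring.
Qed.

Lemma cfun_eval m v :
  q ^+ m * cfun (qint m.+1) v = - qint m * qint m.+1 ^+ v + qint m.+1 * qint m.+2 ^+ v.
Proof.
elim: v => [|v IH] /=.
  rewrite !expr0 !mulr1 qintS; move: (qint m) (q ^+ m) => A Q; ring.
rewrite mulrDr mulrCA IH -qintSl !exprS.
have h2 : qint m.+2 = qint m.+1 + q * q ^+ m by rewrite qintS exprS.
move: (qint m.+2 ^+ v) => D; rewrite h2.
move: (qint m) (qint m.+1) (qint m.+1 ^+ v) (q ^+ m) => A B C Q.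
ring.
Qed.

Definition allle k W (p : LeType k W) N := [forall i, (p.1 i <= N)%N].
Definition Res k W (p : LeType k W) : {set 'I_W} :=
  [set j : 'I_W | [exists i : 'I_k, [&& (j < p.1 i)%N, ~~ p.2 (i, j) &
                         [exists j' : 'I_W, (j' < j)%N && p.2 (i, j')]]]].
Definition Uset k W (p : LeType k W) N : {set 'I_W} :=
  [set j : 'I_W | (j < N)%N && (j \notin Res p)].

Definition join k W (l0 : 'I_W.+1) (r : {set 'I_W}) (p : LeType k W) : LeType k.+1 W :=
  ([ffun i => if unlift ord0 i is Some i' then p.1 i' else l0],
   [ffun c : 'I_k.+1 * 'I_W => if unlift ord0 c.1 is Some i' then p.2 (i', c.2) else c.2 \in r]).

Definition splitLe k W (p : LeType k.+1 W) :
   ('I_W.+1 * {set 'I_W}) * LeType k W :=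
  ((p.1 ord0, [set j | p.2 (ord0, j)]),
   ([ffun i => p.1 (lift ord0 i)], [ffun c : 'I_k * 'I_W => p.2 (lift ord0 c.1, c.2)])).

Definition joint k W (x : ('I_W.+1 * {set 'I_W}) * LeType k W) := join x.1.1 x.1.2 x.2.

Section JoinE.
Variables (k W : nat) (l0 : 'I_W.+1) (r : {set 'I_W}) (p : LeType k W).
Lemma join1_0 : (join l0 r p).1 ord0 = l0.
Proof. by rewrite ffunE unlift_none. Qed.
Lemma join1_S i : (join l0 r p).1 (lift ord0 i) = p.1 i.
Proof. by rewrite ffunE liftK. Qed.
Lemma join2_0 j : (join l0 r p).2 (ord0, j) = (j \in r).
Proof. by rewrite ffunE /= unlift_none. Qed.
Lemma join2_S i j : (join l0 r p).2 (lift ord0 i, j) = p.2 (i, j).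
Proof. by rewrite ffunE /= liftK. Qed.
End JoinE.

Lemma joint_bij k W : bijective (@joint k W).
Proof.
exists (@splitLe k W).
  move=> [[l0 r] [lam D]]; rewrite /splitLe /joint /=.
  congr (_, _, (_, _)).
  - by rewrite ffunE unlift_none.
  - by apply/setP => j; rewrite inE ffunE /= unlift_none.
  - by apply/ffunP => i; rewrite !ffunE liftK.
  - by apply/ffunP => -[i j]; rewrite !ffunE /= liftK.
move=> [lam D]; rewrite /splitLe /joint /join /=; congr (_, _).
  by apply/ffunP => i; rewrite !ffunE; case: (unliftP ord0 i) => [i'|] ->; rewrite ?ffunE.
apply/ffunP => -[i j]; rewrite !ffunE /=.
by case: (unliftP ord0 i) => [i'|] ->; rewrite ?ffunE ?inE.
Qed.

Lemma sum_LeS k W (F : LeType k.+1 W -> R) :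
  \sum_(p : LeType k.+1 W) F p =
  \sum_(l0 : 'I_W.+1) \sum_(r : {set 'I_W}) \sum_(p : LeType k W) F (join l0 r p).
Proof.
rewrite (reindex (@joint k W)) /=; last exact: onW_bij (joint_bij k W).
rewrite /joint -(pair_bigA _ (fun a b => F (join a.1 a.2 b))) /=.
rewrite -(pair_bigA _ (fun a b => \sum_(p : LeType k W) F (join a b p))) /=.
by [].
Qed.

Lemma isLeP k W (p : LeType k W) : reflect
  [/\ forall i i' : 'I_k, (i <= i')%N -> (p.1 i' <= p.1 i)%N,
      forall i (j : 'I_W), p.2 (i, j) -> (j < p.1 i)%N &
      forall i (j : 'I_W), (j < p.1 i)%N -> ~~ p.2 (i, j) -> forall (i' : 'I_k) (j' : 'I_W),
         (i' < i)%N -> p.2 (i', j) -> (j' < j)%N -> p.2 (i, j') -> False]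
  (isLe p).
Proof.
apply: (iffP and3P) => [[/forallP h1 /forallP h2 /forallP h3]|[h1 h2 h3]]; split.
- by move=> i i' le; have /forallP/(_ i') := h1 i; rewrite le.
- by move=> i j d; have := h2 (i, j); rewrite d.
- move=> i j lt nd i' j' lti d1 ltj d2; have := h3 (i, j).
  rewrite /= lt nd /= => /negP; apply; apply/andP; split; apply/existsP.
    by exists i'; rewrite lti.
  by exists j'; rewrite ltj.
- by apply/forallP => i; apply/forallP => i'; apply/implyP => le; exact: h1.
- by apply/forallP => -[i j]; apply/implyP => d; exact: h2.
apply/forallP => -[i j]; apply/implyP => /andP[lt nd].
apply/negP => /andP[/existsP[i' /andP[a b]] /existsP[j' /andP[c d]]].
exact: (h3 i j lt nd i' j').
Qed.

Lemma ordS_cases n (i : 'I_n.+1) : i = ord0 \/ exists a, i = lift ord0 a.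
Proof. by case: (unliftP ord0 i) => [a|] ->; [right; exists a | left]. Qed.

Lemma isLe_join k W (l0 : 'I_W.+1) (r : {set 'I_W}) (p : LeType k W) :
  isLe (join l0 r p) = [&& isLe p, allle p l0 & r \subset Uset p l0].
Proof.
apply/isLeP/and3P => [[h1 h2 h3]|[/isLeP[h1 h2 h3] /forallP hl /subsetP hr]].
  split.
  - apply/isLeP; split.
    + by move=> i i' le; have := h1 (lift ord0 i) (lift ord0 i'); rewrite !join1_S !lift0; apply.
    + by move=> i j d; have := h2 (lift ord0 i) j; rewrite join2_S join1_S; apply.
    + move=> i j lt nd i' j' lti d1 ltj d2.
      apply: (h3 (lift ord0 i) j _ _ (lift ord0 i') j'); rewrite ?join1_S ?join2_S ?lift0 //.
  - by apply/forallP => i; have := h1 ord0 (lift ord0 i); rewrite join1_S join1_0; apply.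
  - apply/subsetP => j jr; rewrite inE; apply/andP; split.
      by have := h2 ord0 j; rewrite join2_0 join1_0; apply.
    rewrite inE; apply/negP => /existsP[i /and3P[lt nd /existsP[j' /andP[ltj d]]]].
    apply: (h3 (lift ord0 i) j _ _ ord0 j'); rewrite ?join1_S ?join2_S ?join2_0 ?lift0 //.
split.
- move=> i i'; case: (ordS_cases i) => [->|[a ->]]; case: (ordS_cases i') => [->|[b ->]];
    rewrite ?join1_S ?join1_0 ?lift0 //.
  by rewrite ltnS; apply: h1.
- move=> i j; case: (ordS_cases i) => [->|[a ->]]; rewrite ?join2_S ?join1_S ?join2_0 ?join1_0.
    by move=> /hr; rewrite inE => /andP[].
  by apply: h2.
move=> i j; case: (ordS_cases i) => [->|[a ->]]; first by move=> _ _ i' j'; rewrite ltn0.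
rewrite join1_S join2_S => lt nd i' j'.
case: (ordS_cases i') => [->|[b ->]]; rewrite ?join2_S ?join2_0 ?lift0 ?ltnS.
  move=> _ jr ltj d2; have := hr j jr; rewrite !inE => /andP[_ /negP]; apply.
  by apply/existsP; exists a; rewrite lt nd /=; apply/existsP; exists j'; rewrite ltj.
by move=> lti d1 ltj d2; apply: (h3 a j lt nd b j').
Qed.

Lemma existsS n (P : pred 'I_n.+1) :
  [exists i, P i] = P ord0 || [exists i : 'I_n, P (lift ord0 i)].
Proof.
apply/existsP/orP => [[i]|[h|/existsP[i h]]].
- by case: (ordS_cases i) => [->|[a ->]] h; [left | right; apply/existsP; exists a].
- by exists ord0.
- by exists (lift ord0 i).
Qed.

Lemma card_predE (T : finType) (P : pred T) : #|[pred c | P c]| = (\sum_(c : T) (P c : nat))%N.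
Proof.
rewrite -sum1_card big_mkcond /=; apply: eq_bigr => c _.
by rewrite inE; case: (P c).
Qed.

Lemma card_setE (T : finType) (A : {set T}) : #|A| = (\sum_(c : T) (c \in A : nat))%N.
Proof.
rewrite -sum1_card big_mkcond /=; apply: eq_bigr => c _.
by case: (c \in A).
Qed.

Lemma LeRank_join k W (l0 : 'I_W.+1) (r : {set 'I_W}) (p : LeType k W) :
  LeRank (join l0 r p) = (#|r| + LeRank p)%N.
Proof.
rewrite /LeRank !card_predE.
rewrite (eq_bigr (fun c => ((join l0 r p).2 (c.1, c.2) : nat))); last by move=> [].
rewrite [X in (_ + X)%N](eq_bigr (fun c => (p.2 (c.1, c.2) : nat))); last by move=> [].
rewrite -(pair_bigA _ (fun i j => ((join l0 r p).2 (i, j) : nat))) /=.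
rewrite -(pair_bigA _ (fun i j => (p.2 (i, j) : nat))) /=.
rewrite big_ord_recl; congr (_ + _)%N.
  by apply: eq_bigr => j _; rewrite join2_0.
by apply: eq_bigr => i _; apply: eq_bigr => j _; rewrite join2_S.
Qed.

Lemma Res_join k W (l0 : 'I_W.+1) (r : {set 'I_W}) (p : LeType k W) :
  Res (join l0 r p) = Res p :|: [set j : 'I_W | (j < l0)%N && newres r j].
Proof.
apply/setP => j; rewrite !inE existsS join1_0 join2_0 orbC; congr (_ || _).
  apply: eq_existsb => a; rewrite join1_S join2_S.
  by congr [&& _, _ & _]; apply: eq_existsb => j'; rewrite join2_S.
rewrite /newres; congr [&& _, _ & _]; apply: eq_existsb => j'; rewrite join2_0.
by [].
Qed.

Lemma Uset_join k W (l0 : 'I_W.+1) (r : {set 'I_W}) (p : LeType k W) :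
  Uset (join l0 r p) l0 = [set j in Uset p l0 | ~~ newres r j].
Proof.
apply/setP => j; rewrite /Uset Res_join !inE negb_or.
by case: (j < l0)%N.
Qed.

Definition SS W k N m : R := \sum_(p : LeType k W)
  (if isLe p && allle p N then q ^+ LeRank p * qint m.+1 ^+ #|Uset p N| else 0).

Lemma E_top W k m (l0 : 'I_W.+1) :
  \sum_(p : LeType k.+1 W) (if isLe p && (p.1 ord0 == l0)
       then q ^+ LeRank p * qint m.+1 ^+ #|Uset p l0| else 0) =
  \sum_(p : LeType k W) (if isLe p && allle p l0
       then q ^+ LeRank p * cfun (qint m.+1) #|Uset p l0| else 0).
Proof.
rewrite sum_LeS.
under eq_bigr => l1 _ do under eq_bigr => r _ do under eq_bigr => p _ do rewrite join1_0.
rewrite (bigD1 l0) //= [X in _ + X]big1 ?addr0; last first.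
  move=> l1 hl1; apply: big1 => r _; apply: big1 => p _.
  by rewrite (negbTE hl1) andbF.
rewrite exchange_big; apply: eq_bigr => p _.
under eq_bigr => r _ do rewrite isLe_join eqxx andbT LeRank_join Uset_join.
case: (boolP (isLe p && allle p l0)) => hp; last first.
  by apply: big1 => r _; rewrite andbA (negbTE hp).
rewrite -(sum_subsets_c (Uset p l0)) mulr_sumr; apply: eq_bigr => r _.
rewrite andbA hp /=; case: (r \subset Uset p l0); last by rewrite mulr0.
by rewrite exprD mulrA (mulrC (q ^+ LeRank p)).
Qed.

Lemma allle_top k W (p : LeType k.+1 W) N : isLe p -> allle p N = (p.1 ord0 <= N)%N.
Proof.
move=> /isLeP[h1 _ _]; apply/forallP/idP => [h|h i]; first exact: h.
exact: leq_trans (h1 ord0 i (leq0n _)) h.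
Qed.

Lemma Res_lt k W (p : LeType k W) N j : allle p N -> j \in Res p -> (j < N)%N.
Proof.
move=> /forallP hl; rewrite inE => /existsP[i /and3P[lt _ _]].
exact: leq_trans lt (hl i).
Qed.

Lemma Uset_S k W (p : LeType k W) N (hN : (N < W)%N) :
  allle p N -> #|Uset p N.+1| = (#|Uset p N|).+1.
Proof.
move=> hl.
have -> : Uset p N.+1 = Ordinal hN |: Uset p N.
  apply/setP => j; rewrite !inE ltnS leq_eqVlt -val_eqE /=.
  case: (eqVneq (j : nat) N) => [e|] //=.
  apply/negP => hj; suff : (j < N)%N by rewrite e ltnn.
  by apply: (Res_lt hl); rewrite inE.
by rewrite cardsU1 !inE ltnn.
Qed.

Lemma SS_split W k N m (hN : (N < W.+1)%N) :
  SS W k.+1 N m = (if N is N'.+1 then qint m.+1 * SS W k.+1 N' m else 0) +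
  \sum_(p : LeType k.+1 W) (if isLe p && (p.1 ord0 == Ordinal hN)
       then q ^+ LeRank p * qint m.+1 ^+ #|Uset p (Ordinal hN)| else 0).
Proof.
rewrite /SS; case: N hN => [|N] hN.
  rewrite add0r; apply: eq_bigr => p _.
  case: (boolP (isLe p)) => //= hp.
  by rewrite allle_top // leqn0 -val_eqE.
rewrite mulr_sumr -big_split; apply: eq_bigr => p _.
case: (boolP (isLe p)) => /= hp; last by rewrite mulr0 addr0.
rewrite !allle_top // -val_eqE /= leq_eqVlt ltnS.
case: (eqVneq (p.1 ord0 : nat) N.+1) => [e|ne] /=.
  by rewrite e ltnn mulr0 add0r.
rewrite addr0; case: ifP => hle; last by rewrite mulr0.
rewrite Uset_S ?exprS; last by rewrite allle_top.
  by rewrite mulrCA.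
by [].
Qed.

Lemma SS_rec W k N m : (N <= W)%N ->
  q ^+ m * SS W k.+1 N m =
  q ^+ m * (if N is N'.+1 then qint m.+1 * SS W k.+1 N' m else 0) +
  (qint m.+1 * SS W k N m.+1 - qint m * SS W k N m).
Proof.
move=> hN; have hN' : (N < W.+1)%N by rewrite ltnS.
rewrite (SS_split _ _ hN') E_top mulrDr; congr (_ + _).
rewrite /SS !mulr_sumr -sumrB; apply: eq_bigr => p _ /=.
case: ifP => _; last by rewrite !mulr0 subr0.
rewrite mulrCA cfun_eval.
move: (q ^+ LeRank p) (qint m) (qint m.+1) (qint m.+1 ^+ #|Uset p N|) (qint m.+2 ^+ #|Uset p N|) => A B C D E.
ring.
Qed.

Lemma SS0 W N m : (N <= W)%N -> SS W 0 N m = qint m.+1 ^+ N.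
Proof.
move=> hN.
have hLe : forall p : LeType 0 W, isLe p by move=> p; apply/isLeP; split => -[].
have hal : forall (p : LeType 0 W) N, allle p N by move=> p N'; apply/forallP => -[].
have hrk : forall p : LeType 0 W, LeRank p = 0%N.
  by move=> p; rewrite /LeRank card_predE big1 // => -[[]].
have hU : forall (p : LeType 0 W) N, (N <= W)%N -> #|Uset p N| = N.
  move=> p; elim=> [|N' IH] hN'.
    apply/eqP; rewrite cards_eq0; apply/eqP/setP => j; rewrite !inE.
    by rewrite ltn0.
  by rewrite Uset_S // IH // ltnW.
pose p0 : LeType 0 W := ([ffun i => ord0], [ffun c => false]).
rewrite /SS (bigD1 p0) //= big1 ?addr0.
  by rewrite hLe hal /= hrk expr0 mul1r hU.
move=> p hp; exfalso; move/eqP: hp; apply.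
case: p => [lam D]; congr (_, _); apply/ffunP; by case => -[].
Qed.

Definition Phi W m n k : R := if (k <= n)%N then SS W k (n - k) m else 0.

Lemma Phi_Rel W m n k : (n - k <= W)%N -> Rel q (Phi W) m n k.
Proof.
rewrite /Rel /Phi; case: k => [|k] hW.
  rewrite subn0 in hW; case: n hW => [|n] hW /=.
    by rewrite SS0 // expr0 mulr1 addr0.
  by rewrite !subn0 (@SS0 W n.+1 m hW) (@SS0 W n m (ltnW hW)) exprS mulrA add0r addr0.
case: n hW => [|n] hW /=; first by rewrite mulr0 addr0.
rewrite ltnS subSS add0r; case: (leqP k n) => hkn; last first.
  by rewrite ltnNge (ltnW hkn) /= !mulr0 subr0 addr0.
rewrite SS_rec; last by move: hW; rewrite subSS.
congr (_ + _).
case: (ltngtP k n) hkn => // [lt|eq] _; last by rewrite eq subnn !mulr0.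
by rewrite -subnSK // mulrA.
Qed.
End C.

Unset Implicit Arguments.
Set Strict Implicit.

Theorem mainTheorem5 (R : comUnitRingType) (q : R) (hq : q \is a GRing.unit)
  (g : nat -> ser R)
  (hg : forall j : nat, sermul (factor q j) (g j) = serone R) :
  Aser q = rhs q g.
Proof.
apply: functional_extensionality => n; apply: functional_extensionality => k.
have key : Psi q g 0 n k = Phi q (n - k) 0 n k.
  apply: (@Rel_uniq _ q hq (n - k) (fun m n k => Psi q g m n k) (Phi q (n - k))) => //.
    by move=> m n' k' _; exact: (Psi_Rel hg m n' k').
  by move=> m n' k' h; exact: Phi_Rel.
rewrite rhs_Psi key (g0E hg) /Aser /Phi /Akn.
clear key.
case: k => [|k] /=.
  by rewrite subn0 SS0 // qint1 expr1n subrr.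
case: (leqP k.+1 n) => h; last by rewrite subr0.
rewrite subr0 /SS big_mkcond; apply: eq_bigr => p _.
have -> : allle p (n - k.+1) by apply/forallP => i; rewrite -ltnS ltn_ord.
by rewrite andbT qint1 expr1n mulr1.
Qed.
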